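(* Let $A$ be a real $m\times n$ matrix with $\|A\|_\infty\le1$. Then there exist a sequence of partitions $\{\mathcal P_j\}_{j\ge1}$ of $\{1,\dots,m\}$ and a sequence of partitions $\{\mathcal Q_j\}_{j\ge1}$ of $\{1,\dots,n\}$ such that for each $j\ge1$: (1) $\mathcal P_{j+1}$ refines $\mathcal P_j$ and $\mathcal Q_{j+1}$ refines $\mathcal Q_j$; (2) $|\mathcal P_j|$ and $|\mathcal Q_j|$ are at most $(2^{j+2}j)^{j^2}$; (3) $\|A-A^{\mathcal P_j,\mathcal Q_j}\|_\Box\le 2j^{-1}+6j^32^{-j}$.
   Context: $\|A\|_\infty=\max|a_{ij}|$; $\|A\|_\Box=\frac1{mn}\max\{|x^TAy|:x\in\mathbb{R}^m,y\in\mathbb{R}^n,\|x\|_\infty\le1,\|y\|_\infty\le1\}$. For a partition $\mathcal P$ of the row indices and $\mathcal Q$ of the column indices, the blocks are the sets $S\times T$ with $S\in\mathcal P$, $T\in\mathcal Q$, and $A^{\mathcal P,\mathcal Q}$ is the matrix obtained from $A$ by replacing every entry in each block by the average of the entries of $A$ in that block. *)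

(* Defs.v *)
From HB Require Import structures.
From mathcomp Require Import all_boot all_order all_algebra.
From mathcomp Require Import classical_sets reals.
Set Implicit Arguments. Unset Strict Implicit. Unset Printing Implicit Defensive.
Import Order.TTheory GRing.Theory Num.Theory.
Local Open Scope ring_scope.
Local Open Scope classical_set_scope.

Definition entry_bounded (R : realType) m n (A : 'M[R]_(m, n)) (c : R) :=
  forall i j, `|A i j| <= c.

(* cut norm: (1/(mn)) * max { |x^T A y| : ||x||_oo <= 1, ||y||_oo <= 1 },
   the max (which exists) is written as a supremum. *)
Definition cutnorm (R : realType) m n (A : 'M[R]_(m, n)) : R :=
  sup [set r : R | exists (x : 'cV[R]_m) (y : 'cV[R]_n),
         (forall i, `|x i 0| <= 1) /\ (forall j, `|y j 0| <= 1) /\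
         r = `|(x^T *m A *m y) 0 0| / (m * n)%:R].

Definition refines (T : finType) (Q P : {set {set T}}) :=
  forall B, B \in Q -> exists2 C, C \in P & B \subset C.

Definition blockavg (R : realType) m n (P : {set {set 'I_m}}) (Q : {set {set 'I_n}})
  (A : 'M[R]_(m, n)) : 'M[R]_(m, n) :=
  \matrix_(i, k)
    ((\sum_(a | a \in finset.pblock P i) \sum_(b | b \in finset.pblock Q k) A a b) /
     (#|finset.pblock P i| * #|finset.pblock Q k|)%:R).

(* Main.v *)
Require Import Defs.
From HB Require Import structures.
From mathcomp Require Import all_boot all_order all_algebra.
From mathcomp Require Import classical_sets reals.
From mathcomp Require Import ring lra zify.
Set Implicit Arguments. Unset Strict Implicit. Unset Printing Implicit Defensive.
Import Order.TTheory GRing.Theory Num.Theory.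
Local Open Scope ring_scope.

Section Gen.
Variable R : realType.

Definition cls (T : finType) (X : eqType) (f : T -> X) (i : T) : {set T} :=
  [set a | f i == f a].

Lemma cls_self (T : finType) (X : eqType) (f : T -> X) i : i \in cls f i.
Proof. by rewrite inE. Qed.

Lemma cls_sym (T : finType) (X : eqType) (f : T -> X) i a :
  (a \in cls f i) = (i \in cls f a).
Proof. by rewrite !inE eq_sym. Qed.

Lemma cls_eq (T : finType) (X : eqType) (f : T -> X) i a :
  a \in cls f i -> cls f a = cls f i.
Proof. by rewrite inE => /eqP e; apply/setP => b; rewrite !inE e. Qed.

Lemma cls_card_gt0 (T : finType) (X : eqType) (f : T -> X) i :
  (0 < #|cls f i|)%N.
Proof. by apply/card_gt0P; exists i; rewrite cls_self. Qed.

Lemma avg1 (T : finType) (X : eqType) (f : T -> X) (F : T -> R) :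
  \sum_i \sum_(a in cls f i) F a / (#|cls f a|)%:R = \sum_a F a.
Proof.
rewrite (exchange_big_dep xpredT) //=; apply: eq_bigr => a _.
under eq_bigl => i do rewrite cls_sym.
rewrite sumr_const -[_ *+ _]mulr_natr divfK //.
by rewrite pnatr_eq0 -lt0n cls_card_gt0.
Qed.

End Gen.

Section Mx.
Variables (R : realType) (m n : nat).
Implicit Types (X Y Z : 'M[R]_(m, n)).

Definition ip X Y := \sum_i \sum_k X i k * Y i k.

Definition Eav (X1 X2 : eqType) (f : 'I_m -> X1) (g : 'I_n -> X2) X : 'M[R]_(m, n) :=
  \matrix_(i, k) ((\sum_(a in cls f i) \sum_(b in cls g k) X a b) /
                  (#|cls f i| * #|cls g k|)%:R).

Definition meas (X1 X2 : eqType) (f : 'I_m -> X1) (g : 'I_n -> X2) X :=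
  forall a a' b b', f a = f a' -> g b = g b' -> X a b = X a' b'.

Lemma proj (X1 X2 : eqType) (f : 'I_m -> X1) (g : 'I_n -> X2) X Y :
  meas f g Y -> ip (Eav f g X) Y = ip X Y.
Proof.
move=> mY.
have step : forall i k, Eav f g X i k * Y i k =
  \sum_(a in cls f i) (\sum_(b in cls g k) (X a b * Y a b / (#|cls f a|)%:R)
     / (#|cls g b|)%:R).
  move=> i k; rewrite mxE natrM invfM mulrA !mulr_suml.
  apply: eq_bigr => a ai; rewrite !mulr_suml.
  apply: eq_bigr => b bk; rewrite (cls_eq ai) (cls_eq bk).
  move: ai bk; rewrite !inE => /eqP fa /eqP gb.
  by rewrite (mY a i b k) // mulrAC [X a b * _ * _]mulrAC.
rewrite /ip; under eq_bigr => i _ do under eq_bigr => k _ do rewrite step.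
under eq_bigr => i _ do rewrite exchange_big /=.
under eq_bigr => i _ do under eq_bigr => a _ do rewrite avg1 -mulr_suml.
by rewrite avg1.
Qed.


Lemma msq_ge0 (x : R) : 0 <= x * x.
Proof. by rewrite -expr2 sqr_ge0. Qed.

Lemma ipC X Y : ip X Y = ip Y X.
Proof. by apply: eq_bigr => i _; apply: eq_bigr => k _; rewrite mulrC. Qed.

Lemma ipDl X Y Z : ip (X + Y) Z = ip X Z + ip Y Z.
Proof.
rewrite /ip -big_split; apply: eq_bigr => i _; rewrite -big_split.
by apply: eq_bigr => k _; rewrite mxE mulrDl.
Qed.

Lemma ipNl X Y : ip (- X) Y = - ip X Y.
Proof.
rewrite /ip -sumrN; apply: eq_bigr => i _; rewrite -sumrN.
by apply: eq_bigr => k _; rewrite mxE mulNr.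
Qed.

Lemma ipZl a X Y : ip (a *: X) Y = a * ip X Y.
Proof.
rewrite /ip mulr_sumr; apply: eq_bigr => i _; rewrite mulr_sumr.
by apply: eq_bigr => k _; rewrite mxE mulrA.
Qed.

Lemma ipBl X Y Z : ip (X - Y) Z = ip X Z - ip Y Z.
Proof. by rewrite ipDl ipNl. Qed.

Lemma ipBr X Y Z : ip Z (X - Y) = ip Z X - ip Z Y.
Proof. by rewrite ipC ipBl ipC [ip Y Z]ipC. Qed.

Lemma ipZr a X Y : ip Y (a *: X) = a * ip Y X.
Proof. by rewrite ipC ipZl ipC. Qed.

Lemma ip_ge0 X : 0 <= ip X X.
Proof. by apply: sumr_ge0 => i _; apply: sumr_ge0 => k _; apply: msq_ge0. Qed.

Lemma ip_eq0 X : ip X X = 0 -> forall i k, X i k = 0.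
Proof.
move=> h i k.
have h1 := psumr_eq0P (fun i _ => sumr_ge0 _ (fun k _ => msq_ge0 (X i k))) h.
have h2 := psumr_eq0P (fun k _ => msq_ge0 (X i k)) (h1 i isT).
by have /eqP := h2 k isT; rewrite mulf_eq0 orbb => /eqP.
Qed.

Lemma CS X Y : ip X Y ^+ 2 <= ip X X * ip Y Y.
Proof.
set a := ip Y Y; set b := ip X Y; set c := ip X X.
have h : 0 <= ip (a *: X - b *: Y) (a *: X - b *: Y) by exact: ip_ge0.
rewrite !ipBl !ipBr !ipZl !ipZr -/a -/b -/c [ip Y X]ipC -/b in h.
have ha : 0 <= a by exact: ip_ge0.
case: (eqVneq a 0) => ha'.
  have Y0 := ip_eq0 ha'.
  have -> : b = 0 by rewrite /b /ip big1 // => i _; rewrite big1 // => k _; rewrite Y0 mulr0.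
  by rewrite expr0n /= mulr_ge0 // ip_ge0.
have ha2 : 0 < a by rewrite lt_def ha' ha.
have : 0 <= a * (c * a - b ^+ 2) by rewrite expr2; nra.
by rewrite pmulr_rge0 // subr_ge0 mulrC.
Qed.


Lemma Eav_meas (X1 X2 : eqType) (f : 'I_m -> X1) (g : 'I_n -> X2) X :
  meas f g (Eav f g X).
Proof.
move=> a a' b b' fa gb; rewrite !mxE.
have -> : cls f a = cls f a' by apply/setP => c; rewrite !inE fa.
by have -> : cls g b = cls g b' by apply/setP => c; rewrite !inE gb.
Qed.

Lemma meas_ref (X1 X2 Y1 Y2 : eqType) (f : 'I_m -> X1) (g : 'I_n -> X2)
  (f' : 'I_m -> Y1) (g' : 'I_n -> Y2) X :
  (forall a a', f' a = f' a' -> f a = f a') ->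
  (forall b b', g' b = g' b' -> g b = g b') ->
  meas f g X -> meas f' g' X.
Proof. by move=> hf hg mX a a' b b' /hf fa /hg gb; apply: mX. Qed.

Lemma pyth (X1 X2 Y1 Y2 : eqType) (f : 'I_m -> X1) (g : 'I_n -> X2)
  (f' : 'I_m -> Y1) (g' : 'I_n -> Y2) X :
  (forall a a', f' a = f' a' -> f a = f a') ->
  (forall b b', g' b = g' b' -> g b = g b') ->
  ip (Eav f' g' X - Eav f g X) (Eav f' g' X - Eav f g X) =
  ip (Eav f' g' X) (Eav f' g' X) - ip (Eav f g X) (Eav f g X).
Proof.
move=> hf hg.
have m1 : meas f' g' (Eav f g X) by exact: (meas_ref hf hg (Eav_meas (f:=f) (g:=g) X)).
rewrite !ipBl !ipBr [ip (Eav f g X) (Eav f' g' X)]ipC !proj //; last exact: Eav_meas.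
rewrite subrr subr0 //.
exact: Eav_meas.
Qed.

Definition indm (S : {set 'I_m}) (T : {set 'I_n}) : 'M[R]_(m, n) :=
  \matrix_(i, k) ((i \in S) && (k \in T))%:R.

Lemma ip_indm X S T : ip X (indm S T) = \sum_(i in S) \sum_(k in T) X i k.
Proof.
rewrite /ip [RHS]big_mkcond; apply: eq_bigr => i _ /=.
case: (boolP (i \in S)) => iS /=; last by rewrite big1 // => k _; rewrite mxE (negbTE iS) /= mulr0.
rewrite [RHS]big_mkcond; apply: eq_bigr => k _; rewrite mxE iS /=.
by case: (k \in T); rewrite ?mulr1 ?mulr0.
Qed.

Lemma ip_le_mn Y : (forall i k, `|Y i k| <= 1) -> ip Y Y <= (m * n)%:R.
Proof.
move=> hY; apply: (@le_trans _ _ (\sum_(i < m) \sum_(k < n) (1 : R))).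
  apply: ler_sum => i _; apply: ler_sum => k _.
  have /andP[h1 h2] : (-1 <= Y i k <= 1) by rewrite -ler_norml hY.
  nra.
  by rewrite !sumr_const !card_ord -mulrnA mulnC.
Qed.


Lemma Eav_bd (X1 X2 : eqType) (f : 'I_m -> X1) (g : 'I_n -> X2) X :
  (forall i k, `|X i k| <= 1) -> forall i k, `|Eav f g X i k| <= 1.
Proof.
move=> hX i k; rewrite mxE normrM normfV normr_nat.
have hN : 0 < (#|cls f i| * #|cls g k|)%:R :> R.
  by rewrite ltr0n muln_gt0 !cls_card_gt0.
rewrite ler_pdivrMr // mul1r.
apply: (le_trans (ler_norm_sum _ _ _)).
apply: (@le_trans _ _ (\sum_(a in cls f i) (#|cls g k|)%:R)).
  apply: ler_sum => a _; apply: (le_trans (ler_norm_sum _ _ _)).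
  by rewrite -sum1_card natr_sum; apply: ler_sum => b _; rewrite hX.
by rewrite sumr_const -mulrnA mulnC.
Qed.

Lemma incr (X1 X2 Y1 Y2 : eqType) (f : 'I_m -> X1) (g : 'I_n -> X2)
  (f' : 'I_m -> Y1) (g' : 'I_n -> Y2) X S T :
  (forall a a', f' a = f' a' -> f a = f a') ->
  (forall b b', g' b = g' b' -> g b = g b') ->
  meas f' g' (indm S T) ->
  ip (X - Eav f g X) (indm S T) ^+ 2 <=
  (m * n)%:R * (ip (Eav f' g' X) (Eav f' g' X) - ip (Eav f g X) (Eav f g X)).
Proof.
move=> hf hg mI.
rewrite ipBl -(proj X mI) -ipBl -(pyth X hf hg).
apply: (le_trans (CS _ _)); rewrite mulrC ler_wpM2r ?ip_ge0 //.
apply: ip_le_mn => i k; rewrite mxE; case: (_ && _); by rewrite ?normr1 ?normr0.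
Qed.

End Mx.

Section Cut.
Variable R : realType.

Lemma L1 (T : finType) (w y : T -> R) : (forall k, `|y k| <= 1) ->
  exists U : {set T}, `|\sum_k w k * y k| <= 2 * `|\sum_(k in U) w k|.
Proof.
move=> hy.
have h1 : `|\sum_k w k * y k| <= \sum_k `|w k|.
  apply: (le_trans (ler_norm_sum _ _ _)); apply: ler_sum => k _.
  by rewrite normrM ler_piMr.
rewrite [X in _ <= X](bigID (fun k => 0 <= w k)) /= in h1.
set U := [set k | 0 <= w k]; set V := [set k | ~~ (0 <= w k)].
have eU : \sum_(k | 0 <= w k) `|w k| = \sum_(k in U) w k.
  by apply: eq_big => [k|k hk]; rewrite ?inE // ger0_norm.
have eV : \sum_(k | ~~ (0 <= w k)) `|w k| = - \sum_(k in V) w k.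
  rewrite -sumrN; apply: eq_big => [k|k hk]; rewrite ?inE // ltr0_norm //.
  by rewrite ltNge.
rewrite eU eV in h1.
have a1 : \sum_(k in U) w k <= `|\sum_(k in U) w k| by exact: ler_norm.
have a2 : - \sum_(k in V) w k <= `|\sum_(k in V) w k| by rewrite -normrN ler_norm.
case: (lerP `|\sum_(k in U) w k| `|\sum_(k in V) w k|) => h.
  by exists V; lra.
by exists U; lra.
Qed.

Lemma cut_bd m n (B : 'M[R]_(m, n)) (x : 'cV[R]_m) (y : 'cV[R]_n) D :
  (forall i, `|x i 0| <= 1) -> (forall k, `|y k 0| <= 1) ->
  (forall S T, `|ip B (indm R S T)| <= D) ->
  `|(x^T *m B *m y) 0 0| <= 4 * D.
Proof.
move=> hx hy hD.
have -> : (x^T *m B *m y) 0 0 = \sum_k (\sum_i x i 0 * B i k) * y k 0.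
  rewrite mxE; apply: eq_bigr => k _; rewrite mxE; congr (_ * _).
  by apply: eq_bigr => i _; rewrite mxE.
have [U /= hU] := L1 (fun k => \sum_i x i 0 * B i k) hy.
have e : \sum_(k in U) \sum_i x i 0 * B i k = \sum_i (\sum_(k in U) B i k) * x i 0.
  rewrite exchange_big /=; apply: eq_bigr => i _; rewrite mulr_suml.
  by apply: eq_bigr => k _; rewrite mulrC.
rewrite e in hU.
have [S /= hS] := L1 (fun i => \sum_(k in U) B i k) hx.
have := hD S U; rewrite ip_indm => h3.
lra.
Qed.

Lemma cutnorm_le m n (B : 'M[R]_(m, n)) c :
  (forall (x : 'cV[R]_m) (y : 'cV[R]_n), (forall i, `|x i 0| <= 1) ->
     (forall k, `|y k 0| <= 1) -> `|(x^T *m B *m y) 0 0| <= c) ->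
  cutnorm B <= c / (m * n)%:R.
Proof.
move=> hc; apply: ge_sup.
  exists 0, 0, 0; split; first by move=> i; rewrite mxE normr0.
  split; first by move=> i; rewrite mxE normr0.
  by rewrite mulmx0 mxE normr0 mul0r.
move=> r [x [y [hx [hy ->]]]].
by rewrite ler_wpM2r ?invr_ge0 ?ler0n // hc.
Qed.

End Cut.

Section Main.
Variables (R : realType) (m n : nat) (A : 'M[R]_(m, n)).
Hypothesis hA : forall i k, `|A i k| <= 1.

Definition lab (s : seq ({set 'I_m} * {set 'I_n})) (i : 'I_m) : seq bool :=
  map (fun p : {set 'I_m} * {set 'I_n} => i \in p.1) s.
Definition labc (s : seq ({set 'I_m} * {set 'I_n})) (k : 'I_n) : seq bool :=
  map (fun p : {set 'I_m} * {set 'I_n} => k \in p.2) s.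
Definition Es s := Eav (lab s) (labc s) A.
Definition Fs s (p : {set 'I_m} * {set 'I_n}) : R := `|ip (A - Es s) (indm R p.1 p.2)|.
Definition p0 : {set 'I_m} * {set 'I_n} := (finset.set0, finset.set0).
Definition choose s := Order.arg_max p0 xpredT (Fs s).
Fixpoint sq t := if t is t'.+1 then rcons (sq t') (choose (sq t')) else [::].
Definition Dt t := Fs (sq t) (choose (sq t)).
Definition en t := ip (Es (sq t)) (Es (sq t)).

Lemma choose_max s p : Fs s p <= Fs s (choose s).
Proof. by rewrite /choose; case: arg_maxP => //= q _ hq; apply: hq. Qed.

Lemma sq_prefix t t' : (t <= t')%N -> exists r, sq t' = sq t ++ r.
Proof.
move=> /subnK <-; elim: (t' - t)%N => [|d [r hr]]; first by exists [::]; rewrite cats0.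
by exists (rcons r (choose (sq (d + t)))); rewrite addSn /= hr rcons_cat.
Qed.

Lemma size_sq t : size (sq t) = t.
Proof. by elim: t => //= t IH; rewrite size_rcons IH. Qed.

Lemma lab_ref s r a a' : lab (s ++ r) a = lab (s ++ r) a' -> lab s a = lab s a'.
Proof.
rewrite /lab !map_cat => /eqP; rewrite eqseq_cat; last by rewrite !size_map.
by case/andP => /eqP.
Qed.

Lemma labc_ref s r a a' : labc (s ++ r) a = labc (s ++ r) a' -> labc s a = labc s a'.
Proof.
rewrite /labc !map_cat => /eqP; rewrite eqseq_cat; last by rewrite !size_map.
by case/andP => /eqP.
Qed.

Lemma meas_choose t :
  meas (lab (sq t.+1)) (labc (sq t.+1)) (indm R (choose (sq t)).1 (choose (sq t)).2).
Proof.
move=> a a' b b'; rewrite /= /lab /labc !map_rcons => /eqP ha /eqP hb.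
move: ha hb; rewrite !eqseq_rcons => /andP[_ /eqP ha] /andP[_ /eqP hb].
by rewrite !mxE ha hb.
Qed.

Lemma Dt_ge0 t : 0 <= Dt t.
Proof. exact: normr_ge0. Qed.

Lemma step t : Dt t ^+ 2 <= (m * n)%:R * (en t.+1 - en t).
Proof.
rewrite /Dt /Fs real_normK ?num_real //.
have [r hr] := sq_prefix (leqnSn t).
apply: incr; last exact: meas_choose.
  by rewrite hr; apply: lab_ref.
by rewrite hr; apply: labc_ref.
Qed.

Lemma en_bd t : 0 <= en t <= (m * n)%:R.
Proof.
by rewrite ip_ge0 /=; apply: ip_le_mn; apply: Eav_bd.
Qed.

Lemma tele N : \sum_(0 <= t < N) Dt t ^+ 2 <= (m * n)%:R * (m * n)%:R.
Proof.
have h : forall K, \sum_(0 <= t < K) Dt t ^+ 2 <= (m * n)%:R * (en K - en 0).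
  elim => [|K IH]; first by rewrite big_nil subrr mulr0.
  rewrite big_nat_recr //=.
  have := step K; nra.
apply: (le_trans (h N)); apply: ler_wpM2l; first exact: ler0n.
by have := en_bd N; have := en_bd 0; lra.
Qed.

Definition good (j t : nat) := 2 * j%:R * Dt t <= (m * n)%:R.

Lemma exists_good j : (0 < j)%N -> exists2 t, (t < 4 * j ^ 2)%N & good j t.
Proof.
move=> j0.
case: (boolP [exists t : 'I_(4 * j ^ 2), good j t]) => [/existsP [t ht] | /existsPn hn].
  by exists (val t); [exact: ltn_ord | exact: ht].
exfalso.
have nb : forall t, (t < 4 * j ^ 2)%N -> (m * n)%:R < 2 * j%:R * Dt t.
  by move=> t ht; have := hn (Ordinal ht); rewrite /good -ltNge.
have N0 : (0 < 4 * j ^ 2)%N by rewrite muln_gt0 expn_gt0 j0.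
have lt := @ltr_sum_nat R 0 (4 * j ^ 2) (fun _ => ((m * n)%:R) ^+ 2)
   (fun t => (2 * j%:R * Dt t) ^+ 2) N0.
have := lt (fun t ht => ltac:(have := nb t ht; have := ler0n R (m * n); nra)).
rewrite sumr_const_nat subn0.
under [X in _ < X -> _]eq_bigr => t _ do rewrite exprMn.
rewrite -mulr_sumr -[X in X < _]mulr_natr [(4 * j ^ 2)%:R]natrM natrX.
have := tele (4 * j ^ 2).
set S := \sum_(0 <= t < _) _; set u := (m * n)%:R; set v := j%:R.
move=> h1 h2.
have v0 : 0 < v by rewrite ltr0n.
nra.
Qed.


Lemma xBy_bd (B : 'M[R]_(m, n)) (x : 'cV[R]_m) (y : 'cV[R]_n) c :
  (forall i k, `|B i k| <= c) -> (forall i, `|x i 0| <= 1) -> (forall k, `|y k 0| <= 1) ->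
  `|(x^T *m B *m y) 0 0| <= c * (m * n)%:R.
Proof.
move=> hB hx hy.
have -> : (x^T *m B *m y) 0 0 = \sum_k \sum_i x i 0 * B i k * y k 0.
  rewrite mxE; apply: eq_bigr => k _; rewrite mxE mulr_suml.
  by apply: eq_bigr => i _; rewrite mxE.
apply: (le_trans (ler_norm_sum _ _ _)).
apply: (@le_trans _ _ (\sum_(k < n) \sum_(i < m) c)).
  apply: ler_sum => k _; apply: (le_trans (ler_norm_sum _ _ _)).
  apply: ler_sum => i _; rewrite !normrM.
  have := hx i; have := hy k; have := hB i k.
  have := normr_ge0 (x i 0); have := normr_ge0 (y k 0); have := normr_ge0 (B i k).
  move=> b0 y0 x0 hb hyk hxi.
  have h1 : `|x i 0| * `|B i k| <= c by nra.
  have c0 : 0 <= c by apply: le_trans hb.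
  have h2 : 0 <= `|x i 0| * `|B i k| by rewrite mulr_ge0.
  nra.
by rewrite !sumr_const !card_ord -mulrnA mulr_natr mulnC.
Qed.

Lemma cut_2 s : cutnorm (A - Es s) <= 2.
Proof.
apply: (le_trans (cutnorm_le (c := 2 * (m * n)%:R) _)).
  move=> x y hx hy; apply: xBy_bd hx hy => i k.
  rewrite !mxE; apply: (le_trans (ler_normB _ _)).
  by have := hA i k; have := Eav_bd (lab s) (labc s) hA i k; rewrite mxE; lra.
case: (eqVneq (m * n)%:R (0 : R)) => [->|h]; first by rewrite invr0 mulr0.
by rewrite mulfK.
Qed.

Lemma cut_good j t : (0 < j)%N -> good j t -> cutnorm (A - Es (sq t)) <= 2 / j%:R.
Proof.
move=> j0 hg.
apply: (le_trans (cutnorm_le (c := 4 * Dt t) _)).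
  move=> x y hx hy; apply: cut_bd hx hy _ => S T.
  exact: (choose_max (sq t) (S, T)).
have jp : 0 < j%:R :> R by rewrite ltr0n.
case: (eqVneq (m * n)%:R (0 : R)) => [->|h].
  by rewrite invr0 mulr0 divr_ge0 ?ler0n.
have mp : 0 < (m * n)%:R :> R by rewrite lt_def h ler0n.
rewrite ler_pdivrMr // mulrAC ler_pdivlMr //.
move: hg; rewrite /good => hg.
have := Dt_ge0 t; nra.
Qed.


Definition cap j := ((j + 2) * j ^ 2)%N.
Definition tj j := find (good j) (iota 0 (cap j)).

Lemma tj_le j : (tj j <= cap j)%N.
Proof. by have := find_size (good j) (iota 0 (cap j)); rewrite size_iota. Qed.

Lemma tj_before j k : (k < tj j)%N -> ~~ good j k.
Proof.
move=> hk; have := before_find 0 hk.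
by rewrite nth_iota ?add0n => [->|]; last by apply: leq_trans hk (tj_le j).
Qed.

Lemma tj_good j : (tj j < cap j)%N -> good j (tj j).
Proof.
move=> h; have hs : has (good j) (iota 0 (cap j)) by rewrite has_find size_iota.
by have := nth_find 0 hs; rewrite nth_iota.
Qed.

Lemma tj_lt j : (exists2 k, (k < cap j)%N & good j k) -> (tj j < cap j)%N.
Proof.
case=> k hk gk; have : has (good j) (iota 0 (cap j)).
  by apply/hasP; exists k; rewrite // mem_iota.
by rewrite has_find size_iota.
Qed.

Lemma good_mono j t : good j.+1 t -> good j t.
Proof.
rewrite /good -[j.+1]addn1 natrD => h.
have := Dt_ge0 t; lra.
Qed.

Lemma cap_mono j : (cap j <= cap j.+1)%N.
Proof. rewrite /cap; nia. Qed.

Lemma tj_mono j : (tj j <= tj j.+1)%N.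
Proof.
rewrite leqNgt; apply/negP => h.
have h1 : (tj j.+1 < cap j.+1)%N.
  by apply: leq_trans h _; apply: leq_trans (tj_le j) (cap_mono j).
have := tj_before h; rewrite (good_mono (tj_good h1)).
done.
Qed.

End Main.

Lemma pblock_pp (T : finType) (X : eqType) (f : T -> X) i :
  finset.pblock (preim_partition f [set: T]) i = cls f i.
Proof.
apply/setP => a; rewrite pblock_equivalence_partition ?inE //.
by move=> x y z _ _ _; split => // /eqP ->.
Qed.

Lemma ref_pp (T : finType) (X Y : eqType) (f : T -> X) (f' : T -> Y) :
  (forall a a', f' a = f' a' -> f a = f a') ->
  refines (preim_partition f' [set: T]) (preim_partition f [set: T]).
Proof.
move=> h B /imsetP [x _ ->].
exists [set y in [set: T] | f x == f y]; first by apply: imset_f; rewrite inE.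
by apply/fintype.subsetP => y; rewrite !inE /= => /eqP /h ->.
Qed.

Lemma card_pp (T : finType) (f : T -> seq bool) N :
  (forall x, size (f x) = N) -> (#|preim_partition f [set: T]| <= 2 ^ N)%N.
Proof.
move=> hf.
pose h := fun u : N.-tuple bool => [set y | val u == f y].
have sub : preim_partition f [set: T] \subset [set h u | u in [set: N.-tuple bool]].
  apply/fintype.subsetP => B /imsetP [x _ ->]; apply/imsetP.
  exists (@Tuple N bool (f x) (introT eqP (hf x))); first by rewrite inE.
  by apply/setP => y; rewrite !inE.
apply: leq_trans (subset_leq_card sub) _; apply: leq_trans (leq_imset_card _ _) _.
by rewrite cardsT card_tuple card_bool.
Qed.

Theorem lemma10p1 (R : realType) (m n : nat) (A : 'M[R]_(m, n)) :
  entry_bounded A 1 ->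
  exists (P : nat -> {set {set 'I_m}}) (Q : nat -> {set {set 'I_n}}),
    forall j : nat, (0 < j)%N ->
      [/\ finset.partition (P j) [set: 'I_m], finset.partition (Q j) [set: 'I_n],
          refines (P j.+1) (P j) /\ refines (Q j.+1) (Q j),
          (#|P j| <= (2 ^ (j + 2) * j) ^ (j ^ 2))%N /\
          (#|Q j| <= (2 ^ (j + 2) * j) ^ (j ^ 2))%N &
          cutnorm (A - blockavg (P j) (Q j) A) <=
            2 / j%:R + 6 * j%:R ^+ 3 / 2%:R ^+ j].
Proof.
move=> hA.
exists (fun j => preim_partition (lab (n:=n) (sq A (tj A j))) [set: 'I_m]).
exists (fun j => preim_partition (labc (m:=m) (sq A (tj A j))) [set: 'I_n]).
move=> j j0.
have [r hr] := sq_prefix A (tj_mono A j).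
have nb : (2 ^ tj A j <= (2 ^ (j + 2) * j) ^ (j ^ 2))%N.
  apply: leq_trans (leq_pexp2l (isT : (0 < 2)%N) (tj_le A j)) _.
  rewrite /cap expnM leq_exp2r ?expn_gt0 ?j0 //.
  by rewrite leq_pmulr.
split.
- exact: preim_partitionP.
- exact: preim_partitionP.
- split; apply: ref_pp => a a'; rewrite hr.
    exact: lab_ref.
  exact: labc_ref.
- split; apply: leq_trans nb; apply: card_pp => x; by rewrite size_map size_sq.
have -> : blockavg (preim_partition (lab (n:=n) (sq A (tj A j))) [set: 'I_m])
    (preim_partition (labc (m:=m) (sq A (tj A j))) [set: 'I_n]) A = Es A (sq A (tj A j)).
  by apply/matrixP => i k; rewrite !mxE !pblock_pp.
have rhs : 2 / j%:R <= 2 / j%:R + 6 * j%:R ^+ 3 / 2%:R ^+ j :> R.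
  by rewrite lerDl divr_ge0 ?mulr_ge0 ?exprn_ge0 ?ler0n.
apply: le_trans rhs.
case: (ltnP 1 j) => hj.
  apply: cut_good => //; apply: tj_good; apply: tj_lt.
  have [t ht gt] := exists_good hA j0.
  by exists t => //; apply: leq_trans ht _; rewrite /cap; nia.
have -> : j = 1%N by lia.
by rewrite divr1; apply: cut_2.
Qed.
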